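(* Let $Y$ be a set and $(A_n)_{n=1}^\infty$ a sequence of pairwise disjoint finite subsets of $Y$. Let $\mathcal{X}\subseteq\bigcup_{\emptyset\ne F\in[\mathbb{N}]^{<\infty}}\prod_{n\in F}A_n$ be hereditary, i.e. $(x_n)_{n\in G}\in\mathcal{X}$ whenever $(x_n)_{n\in F}\in\mathcal{X}$ and $\emptyset\ne G\subseteq F$. Let $\mathcal{H}\subseteq[\mathbb{N}]^{<\infty}$ be a regular family and $\beta$ an ordinal with $\omega_1>\iota(\mathcal{H})\ge\beta\ge1$. Suppose that for every nonempty $F\in\mathcal{H}$ there exists $(x_n)_{n\in F}\in\mathcal{X}$. Then there exists a tree $T$ on $Y$ with $T\subseteq\mathcal{X}$ and $o(T)\ge\beta$.
   Context: An element $(x_n)_{n\in F}\in\prod_{n\in F}A_n$ with $F=\{n_1<\dots<n_k\}$ is identified with the finite sequence $(x_{n_1},\dots,x_{n_k})\in Y^k$. A tree on a set $S$ is a subset $T\subseteq\bigcup_{n\ge1}S^n$ closed under taking initial segments. For a well-founded tree $T$, $D(T)$ is the set of $(x_1,\dots,x_n)\in T$ having an extension $(x_1,\dots,x_n,x)\in T$, $D^0(T)=T$, $D^{\gamma+1}(T)=D(D^\gamma(T))$, $D^\gamma(T)=\bigcap_{\delta<\gamma}D^\delta(T)$ for limit $\gamma$, and $o(T)$ is the least $\gamma$ with $D^\gamma(T)=\emptyset$. A family $\mathcal{H}\subseteq[\mathbb{N}]^{<\infty}$ is regular if hereditary, spreading and compact in $2^{\mathbb{N}}$; $\iota(\mathcal{H})$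 is the ordinal $\gamma$ with $\mathcal{H}^{(\gamma)}=\{\emptyset\}$, where $\mathcal{H}^{(\gamma)}$ are the iterated Cantor–Bendixson derived sets (limit points, intersections at limits). *)

(* Defs.v *)
From mathcomp Require Import all_boot.
From Stdlib Require List.
Set Implicit Arguments. Unset Strict Implicit. Unset Printing Implicit Defensive.

(** * Countable ordinals as Brouwer trees.
    [OL f] denotes the supremum of the [f n]. Every countable ordinal (< omega_1)
    is represented. *)
Inductive ord : Type := OZ | OS of ord | OL of (nat -> ord).

Inductive ole : ord -> ord -> Prop :=
| ole_Z b : ole OZ b
| ole_SS a b : ole a b -> ole (OS a) (OS b)
| ole_Sr a b : ole a b -> ole a (OS b)
| ole_Ll f b : (forall n, ole (f n) b) -> ole (OL f) b
| ole_Lr a f n : ole a (f n) -> ole a (OL f).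

Definition olt (a b : ord) : Prop := ole (OS a) b.

(** * Families of finite subsets of nat.
    A finite subset of nat is represented by its strictly increasing enumeration. *)
Definition fin_set (s : seq nat) : Prop := sorted ltn s.

Definition fam_hereditary (H : seq nat -> Prop) : Prop :=
  forall s, H s -> forall m : bitseq, H (mask m s).

Definition fam_spreading (H : seq nat -> Prop) : Prop :=
  forall s t, H s -> sorted ltn t -> size t = size s ->
    (forall i, i < size s -> nth 0 s i <= nth 0 t i) -> H t.

(* compact in 2^N, i.e. closed: every point of 2^N (possibly an infinite set,
   given by its indicator A) that is approximated by members of H is in H. *)
Definition fam_compact (H : seq nat -> Prop) : Prop :=
  forall A : nat -> bool,
    (forall m, exists s, H s /\ forall i, i < m -> (i \in s) = A i) ->
    exists s, H s /\ forall i, (i \in s) = A i.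

Definition regular (H : seq nat -> Prop) : Prop :=
  (forall s, H s -> fin_set s) /\ fam_hereditary H /\ fam_spreading H /\ fam_compact H.

(* Cantor-Bendixson derivative (limit points, among finite sets, in 2^N). *)
Definition cb_derived (D : seq nat -> Prop) : seq nat -> Prop :=
  fun s => fin_set s /\
    forall m, exists t, D t /\ t <> s /\ forall i, i < m -> (i \in t) = (i \in s).

Fixpoint cb_iter (H : seq nat -> Prop) (a : ord) : seq nat -> Prop :=
  match a with
  | OZ => H
  | OS b => cb_derived (cb_iter H b)
  | OL f => fun s => forall n, cb_iter H (f n) s
  end.

Definition cb_index_is (H : seq nat -> Prop) (a : ord) : Prop :=
  forall s, cb_iter H a s <-> s = [::].

Fixpoint in_prod (Y : Type) (A : nat -> Y -> Prop) (F : seq nat) (s : seq Y) : Prop :=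
  match F, s with
  | [::], [::] => True
  | n :: F', y :: s' => A n y /\ in_prod A F' s'
  | _, _ => False
  end.

(* s is (the identification of) some (x_n)_{n in F}, F nonempty finite *)
Definition prod_elem (Y : Type) (A : nat -> Y -> Prop) (s : seq Y) : Prop :=
  exists F, F <> [::] /\ fin_set F /\ in_prod A F s.

Definition finite_pred (Y : Type) (P : Y -> Prop) : Prop :=
  exists l : seq Y, forall y, P y -> Stdlib.Lists.List.In y l.

Definition pairwise_disjoint (Y : Type) (A : nat -> Y -> Prop) : Prop :=
  forall n m y, n <> m -> A n y -> A m y -> False.

(* restriction to nonempty G subset of F = nonempty subsequence *)
Definition X_hereditary (Y : Type) (X : seq Y -> Prop) : Prop :=
  forall s, X s -> forall m : bitseq, mask m s <> [::] -> X (mask m s).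

Definition is_tree (Y : Type) (T : seq Y -> Prop) : Prop :=
  (forall s, T s -> s <> [::]) /\
  (forall s k, T s -> 0 < k -> T (take k s)).

Definition tree_well_founded (Y : Type) (T : seq Y -> Prop) : Prop :=
  ~ exists f : nat -> Y, forall n, T (mkseq f n.+1).

Definition tree_der (Y : Type) (T : seq Y -> Prop) : seq Y -> Prop :=
  fun s => T s /\ exists x, T (rcons s x).

Fixpoint tree_iter (Y : Type) (T : seq Y -> Prop) (a : ord) : seq Y -> Prop :=
  match a with
  | OZ => T
  | OS b => tree_der (tree_iter T b)
  | OL f => fun s => forall n, tree_iter T (f n) s
  end.

Definition tree_order_ge (Y : Type) (T : seq Y -> Prop) (b : ord) : Prop :=
  forall d, olt d b -> exists s, tree_iter T d s.

(* Main.v *)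
Require Import Defs.
From mathcomp Require Import all_boot.
From mathcomp Require Import zify.
From Stdlib Require Import Classical ClassicalEpsilon.
From Stdlib Require List.
Set Implicit Arguments. Unset Strict Implicit. Unset Printing Implicit Defensive.

Lemma ole_total a : forall b, ole a b \/ ole b a.
Proof.
elim: a => [|a IHa|f IHf] b.
- left; constructor.
- elim: b => [|b IHb|g IHg].
  + right; constructor.
  + by case: (IHa b) => h; [left|right]; apply: ole_SS.
  + case: (classic (exists n, ole (OS a) (g n))) => [[n hn]|hn].
    * by left; apply: ole_Lr hn.
    * right; apply: ole_Ll => n.
      case: (IHg n) => // h; exfalso; apply: hn; by exists n.
- case: (classic (forall n, ole (f n) b)) => [h|h].
  + by left; apply: ole_Ll.
  + move: (not_all_ex_not _ _ h) => [n hn].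
    case: (IHf n b) => h' //; by right; apply: ole_Lr h'.
Qed.

Lemma tree_iter_sub (Y : Type) (T : seq Y -> Prop) a s : tree_iter T a s -> T s.
Proof.
elim: a s => [|a IH|f IH] s /=; first by [].
- by case=> /IH.
- by move=> /(_ 0) /IH.
Qed.

Lemma tree_iter_mono (Y : Type) (T : seq Y -> Prop) a b :
  ole a b -> forall s, tree_iter T b s -> tree_iter T a s.
Proof.
elim=> {a b} /=.
- by move=> b s /tree_iter_sub.
- by move=> a b _ IH s [h [x hx]]; split; [apply: IH|exists x; apply: IH].
- by move=> a b _ IH s [h _]; apply: IH.
- by move=> f b _ IH s h n; apply: IH.
- by move=> a f n _ IH s h; apply: IH.
Qed.

Definition prefix_closed (Y : Type) (P : seq Y -> Prop) :=
  forall s k, P s -> 0 < k -> P (take k s).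

Lemma tree_iter_prefix (Y : Type) (T : seq Y -> Prop) a :
  prefix_closed T -> prefix_closed (tree_iter T a).
Proof.
move=> hT; elim: a => [|a IH|f IH] /=; first by [].
- move=> s k [hs [x hx]] hk; split; first by apply: IH.
  case: (ltnP k (size s)) => hks.
  + exists (nth x s k); rewrite -take_nth //; exact: IH.
  + by rewrite take_oversize //; exists x.
- by move=> s k h hk n; apply: IH.
Qed.

Lemma pigeon (Y : Type) (L : list (seq Y)) (P : seq Y -> Prop) (Q : nat -> seq Y -> Prop) :
  (forall s, P s -> List.In s L) ->
  (forall n, exists s, P s /\ Q n s) ->
  (forall n m, (forall s, Q n s -> Q m s) \/ (forall s, Q m s -> Q n s)) ->
  exists s, P s /\ forall n, Q n s.
Proof.
move=> hL hne hch; apply: NNPP => hno.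
have hx : forall s, P s -> exists n, ~ Q n s.
  move=> s hs; apply: NNPP => hn; apply: hno; exists s; split => // n.
  by apply: NNPP => hq; apply: hn; exists n.
have : forall L' : list (seq Y), exists N, forall s, List.In s L' -> P s -> ~ Q N s.
  elim=> [|x L' [N' IH]]; first by exists 0.
  case: (classic (P x)) => hPx.
  - have [nx hnx] := hx x hPx.
    case: (hch N' nx) => hc.
    + exists N' => s [<-|hs] hPs; first by move/hc.
      exact: IH.
    + exists nx => s [<-|hs] hPs //.
      by move/hc; apply: IH.
  - exists N' => s [<-|hs] hPs //; exact: IH.
move=> /(_ L) [N hN].
have [s [hs hq]] := hne N.
exact: (hN s (hL s hs) hs hq).
Qed.

Definition closedD (D : seq nat -> Prop) :=
  forall s, fin_set s ->
    (forall m, exists t, D t /\ forall i, i < m -> (i \in t) = (i \in s)) -> D s.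

Lemma cb_props H : regular H -> forall a,
  (forall s, cb_iter H a s -> H s) /\ closedD (cb_iter H a).
Proof.
move=> [hfin [hher [hspr hcomp]]].
elim=> [|a [IH1 IH2]|f IH] /=.
- split=> //.
  move=> s fs happ.
  have [s' [hs' hmem]] := hcomp (fun i => i \in s) happ.
  have -> : s = s'; last by [].
  apply: (irr_sorted_eq (leT := ltn)); [exact: ltn_trans|exact: ltnn|by []|exact: hfin|].
  by move=> i; rewrite hmem.
- have sub : forall s, cb_derived (cb_iter H a) s -> cb_iter H a s.
    move=> s [fs hs]; apply: IH2 => // m.
    by have [t [ht [_ hm]]] := hs m; exists t.
  split; first by move=> s /sub /IH1.
  move=> s fs happ; split=> // m.
  have [t [[ft ht] hm]] := happ m.
  case: (classic (t = s)) => [<-|hne]; first exact: ht m.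
  exists t; split; [|split] => //.
  apply: sub; split => //.
- split; first by move=> s /(_ 0) /(proj1 (IH 0)).
  move=> s fs happ n; apply: (proj2 (IH n)) => // m.
  by have [t [ht hm]] := happ m; exists t; split.
Qed.

Lemma cb_mono H : regular H -> forall a b, ole a b ->
  forall s, cb_iter H b s -> cb_iter H a s.
Proof.
move=> hreg a b; elim=> {a b} /=.
- by move=> b s /(proj1 (cb_props hreg b)).
- move=> a b _ IH s [fs hs]; split=> // m.
  by have [t [ht hm]] := hs m; exists t; split=> //; apply: IH.
- move=> a b _ IH s [fs hs]; apply: IH; apply: (proj2 (cb_props hreg b)) => // m.
  by have [t [ht [_ hm]]] := hs m; exists t.
- by move=> f b _ IH s h n; apply: IH.
- by move=> a f n _ IH s h; apply: IH.
Qed.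

Lemma in_prod_size (Y : Type) (A : nat -> Y -> Prop) F s : in_prod A F s -> size F = size s.
Proof. by elim: F s => [|n F IH] [|y s] //= [_ /IH ->]. Qed.

Lemma in_prod_take (Y : Type) (A : nat -> Y -> Prop) F s k :
  in_prod A F s -> in_prod A (take k F) (take k s).
Proof.
elim: F s k => [|n F IH] [|y s] k //=.
case: k => [|k] //= [h1 h2]; split=> //; exact: IH.
Qed.

Lemma in_prod_nth (Y : Type) (A : nat -> Y -> Prop) F s y0 j :
  in_prod A F s -> j < size F -> A (nth 0 F j) (nth y0 s j).
Proof.
elim: F s j => [|n F IH] [|y s] //= j [h1 h2] hj.
case: j hj => [|j] //= hj; exact: IH.
Qed.

Lemma in_prod_cands (Y : Type) (A : nat -> Y -> Prop) :
  (forall n, finite_pred (A n)) ->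
  forall F, exists L : list (seq Y), forall s, in_prod A F s -> List.In s L.
Proof.
move=> hfin; elim=> [|n F [L IH]].
- by exists [:: [::]] => [[|y s]] //= _; left.
- have [l hl] := hfin n.
  exists (List.flat_map (fun y => List.map (cons y) L) l) => [[|y s]] //= [h1 h2].
  apply/List.in_flat_map; exists y; split; first exact: hl.
  by apply: List.in_map; apply: IH.
Qed.

Lemma path_nth_gt a s : path ltn a s -> forall j, j < size s -> a + j < nth 0 s j.
Proof.
elim: s a => [|b s IH] a //= /andP [hab hp] [|j] /= hj; first by lia.
have := IH b hp j hj; lia.
Qed.

Lemma sorted_nth_ge s : sorted ltn s -> forall j, j < size s -> j <= nth 0 s j.
Proof.
case: s => [|a s] //= hp [|j] //= hj.
have := path_nth_gt hp hj; lia.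
Qed.

Lemma filter_prefix m t : sorted ltn t ->
  [seq x <- t | x < m] = take (size [seq x <- t | x < m]) t.
Proof.
elim: t => [|a t IH] //= hp.
have hs := path_sorted hp.
case: ifP => ham /=; first by rewrite -IH.
have hall := order_path_min ltn_trans hp.
suff -> : [seq x <- t | x < m] = [::] by [].
elim: t hall {IH hp hs} => [|b t IH] //= /andP [hb hall].
rewrite IH //; case: ifP => //; lia.
Qed.

Lemma bound_exists (G : seq nat) : exists m, all (fun x => x < m) G.
Proof.
elim: G => [|a G [m hm]]; first by exists 0.
exists (maxn m a.+1) => /=; apply/andP; split; first by lia.
apply/allP => x hx; have := allP hm x hx; lia.
Qed.

Lemma prefix_of m G t : sorted ltn t -> sorted ltn G -> all (fun x => x < m) G ->
  (forall i, i < m -> (i \in t) = (i \in G)) -> t <> G ->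
  size G < size t /\ take (size G) t = G.
Proof.
move=> ht hG hall hm hne.
have eqf : [seq x <- t | x < m] = G.
  apply: (irr_sorted_eq (leT := ltn)); [exact: ltn_trans|exact: ltnn| |exact: hG|].
  - exact: sorted_filter ltn_trans _ _ ht.
  - move=> x; rewrite mem_filter.
    case: (ltnP x m) => hx /=; first by rewrite hm.
    apply/esym/negP => hxG; have := allP hall x hxG; lia.
have htk : take (size G) t = G by rewrite -{2}eqf {1}(filter_prefix m ht) eqf.
split=> //.
have : size G <= size t by rewrite -{1}eqf size_filter count_size.
rewrite leq_eqVlt => /orP [/eqP he|//].
by exfalso; apply: hne; rewrite -htk take_oversize // he.
Qed.

Theorem proposition21 (Y : Type) (A : nat -> Y -> Prop) (X : seq Y -> Prop)
    (H : seq nat -> Prop) (iota beta : ord) :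
  (forall n, finite_pred (A n)) ->
  pairwise_disjoint A ->
  (forall s, X s -> prod_elem A s) ->
  X_hereditary X ->
  regular H ->
  cb_index_is H iota ->
  ole beta iota ->
  ole (OS OZ) beta ->
  (forall F, H F -> F <> [::] -> exists s, X s /\ in_prod A F s) ->
  exists T : seq Y -> Prop,
    is_tree T /\ (forall s, T s -> X s) /\ tree_well_founded T /\ tree_order_ge T beta.
Proof.
move=> hAfin hdisj hXprod hXher hreg hidx hbi _ hex.
have [hHfin [hHher [_ hcomp]]] := hreg.
pose T := fun s => X s /\ s <> [::] /\ exists F, H F /\ in_prod A F s.
have hTpre : prefix_closed T.
  move=> s k [hX [hne [F [hF hp]]]] hk.
  have hne' : take k s <> [::] by case: s hne {hX hp} => // y s _; case: k hk.
  split; first by rewrite takeEmask; apply: hXher => //; rewrite -takeEmask.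
  split=> //; exists (take k F); split; first by rewrite takeEmask; apply: hHher.
  exact: in_prod_take.
have hL : forall d G, cb_iter H d G -> G <> [::] ->
    exists x, in_prod A G x /\ tree_iter T d x.
  elim=> [|b IH|f IH] G /=.
  - move=> hG hne; have [s [hs hp]] := hex G hG hne.
    exists s; split=> //; split=> //; split; last by exists G.
    by move=> e; move: (in_prod_size hp); rewrite e; case: G hne {hG hp}.
  - move=> [fG hs] hne.
    have [m hm] := bound_exists G.
    have [t [ht [hne' hmt]]] := hs m.
    have ft : fin_set t by apply: hHfin; apply: (proj1 (cb_props hreg b)).
    have [hlt htk] := prefix_of ft fG hm hmt hne'.
    have tne : t <> [::] by move=> e; rewrite e in hlt.
    have [x [hpx hx]] := IH t ht tne.
    have hsz := in_prod_size hpx.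
    have Gpos : 0 < size G by case: G hne {fG hs hm hmt hne' hlt htk}.
    case: x hpx hx hsz => [|y0 x'] hpx hx hsz; first by rewrite hsz in hlt.
    exists (take (size G) (y0 :: x')); split; first by rewrite -{1}htk; apply: in_prod_take.
    split; first exact: (@tree_iter_prefix _ T b hTpre) _ (size G) hx Gpos.
    exists (nth y0 (y0 :: x') (size G)); rewrite -take_nth; last by rewrite -hsz.
    exact: (@tree_iter_prefix _ T b hTpre) _ (size G).+1 hx _.
  - move=> hG hne.
    have [L hLc] := in_prod_cands hAfin G.
    have := pigeon (Q := fun n => tree_iter T (f n)) hLc (fun n => IH n G (hG n) hne).
    apply=> n m; case: (ole_total (f n) (f m)) => h.
    + by right; apply: tree_iter_mono.
    + by left; apply: tree_iter_mono.
exists T; split; first split.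
- by move=> s [_ []].
- exact: hTpre.
split; first by move=> s [].
split.
- move=> [f hf].
  pose Ai := fun i => exists n F, H F /\ in_prod A F (mkseq f n.+1) /\ i \in F.
  pose Ab := fun i => if excluded_middle_informative (Ai i) then true else false.
  have hAb : forall i, Ab i = true <-> Ai i.
    by move=> i; rewrite /Ab; case: excluded_middle_informative.
  have getF : forall n, exists F, H F /\ in_prod A F (mkseq f n.+1).
    by move=> n; have [_ [_ [F hF]]] := hf n; exists F.
  have cons : forall n F N G j, in_prod A F (mkseq f n.+1) -> in_prod A G (mkseq f N.+1) ->
      j < size F -> j < size G -> nth 0 F j = nth 0 G j.
    move=> n F N G j hF hG hjF hjG.
    have h1 := in_prod_nth (f 0) hF hjF.
    have h2 := in_prod_nth (f 0) hG hjG.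
    rewrite nth_mkseq in h1; last by rewrite (in_prod_size hF) size_mkseq in hjF.
    rewrite nth_mkseq in h2; last by rewrite (in_prod_size hG) size_mkseq in hjG.
    case: (eqVneq (nth 0 F j) (nth 0 G j)) => // hne.
    by exfalso; apply: (hdisj _ _ _ _ h1 h2); apply/eqP.
  have happ : forall m, exists s, H s /\ forall i, i < m -> (i \in s) = Ab i.
    move=> m; have [F [hF hp]] := getF m; exists F; split=> // i hi.
    apply/idP/idP => h.
    - by apply/hAb; exists m, F.
    - move/hAb: h => [n [G [hG [hpG hiG]]]].
      have hjG : index i G < size G by rewrite index_mem.
      have hji := sorted_nth_ge (hHfin G hG) hjG.
      rewrite nth_index // in hji.
      have hjF : index i G < size F.
        by rewrite (in_prod_size hp) size_mkseq; lia.
      have := cons _ _ _ _ _ hp hpG hjF hjG.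
      rewrite nth_index // => <-; exact: mem_nth.
  have [s [hs hmem]] := hcomp Ab happ.
  have [F [hF hp]] := getF (size s).
  have : size F <= size s.
    apply: uniq_leq_size; first by apply: (sorted_uniq ltn_trans ltnn); exact: (hHfin F hF).
    move=> x hx; rewrite hmem; apply/hAb; by exists (size s), F.
  by rewrite (in_prod_size hp) size_mkseq ltnn.
- move=> d hd.
  have h1 := cb_mono hreg hd; have h2 := cb_mono hreg hbi.
  have [_ hs] := h1 _ (h2 _ (proj2 (hidx [::]) erefl)).
  have [t [ht [hne _]]] := hs 0.
  have [x [_ hx]] := hL d t ht hne.
  by exists x.
Qed.
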